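(* For every signed subcubic graph $\Sigma$, $l_0(\Sigma) = l(\Sigma)$.
   Context: A signed graph $\Sigma = (G,\sigma)$ consists of a finite graph $G$ (loops and multiple edges allowed) and a sign function $\sigma: E(G) \to \{+1,-1\}$. A circle is a connected nonempty $2$-regular subgraph (a loop is a circle of length $1$, a pair of parallel edges forms a circle of length $2$); a circle is positive if the product of the signs of its edges is $+1$ and negative otherwise. $\Sigma$ is balanced if all its circles are positive. The frustration index $l(\Sigma)$ is the smallest number of edges whose deletion from $\Sigma$ leaves a balanced signed graph. The frustration number $l_0(\Sigma)$ is the smallest number of vertices whose deletion (together with all incident edges) from $\Sigma$ leaves a balanced signed graph. $\Sigma$ is subcubic if every vertex of the underlying graph $G$ has degree at most $3$. *)

(* Defs.v *)
From mathcomp Require Import all_boot.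
Set Implicit Arguments. Unset Strict Implicit. Unset Printing Implicit Defensive.

(* A signed graph (loops and multiple edges allowed) is given by a finite
   vertex type V, a finite edge type E, an endpoint map ends : E -> V * V
   (a loop is an edge e with (ends e).1 = (ends e).2), and a sign map
   sgn : E -> bool, where sgn e = true means e is NEGATIVE. *)

Section SignedGraph.
Variables (V E : finType) (ends : E -> V * V) (sgn : E -> bool).

(* degree of v in the spanning subgraph with edge set S; loops count twice *)
Definition deg_in (S : {set E}) (v : V) : nat :=
  \sum_(e in S) (((ends e).1 == v) + ((ends e).2 == v)).

Definition verts_of (S : {set E}) : {set V} :=
  [set v | [exists e in S, ((ends e).1 == v) || ((ends e).2 == v)]].

Definition adj_in (S : {set E}) : rel V :=
  fun u v => [exists e in S, ((ends e == (u, v)) || (ends e == (v, u)))].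

Definition circle (C : {set E}) : bool :=
  [&& C != set0,
      [forall v in verts_of C, deg_in C v == 2] &
      [forall u in verts_of C, forall v in verts_of C, connect (adj_in C) u v]].

Definition positive_circle (C : {set E}) : bool :=
  ~~ odd #|[set e in C | sgn e]|.

(* the signed subgraph with edge set S (on any vertex set containing its
   endpoints) is balanced: every circle in it is positive *)
Definition balanced_edgesb (S : {set E}) : bool :=
  [forall C : {set E}, (circle C && (C \subset S)) ==> positive_circle C].

Definition edges_avoiding (X : {set V}) : {set E} :=
  [set e | ((ends e).1 \notin X) && ((ends e).2 \notin X)].

(* frustration index l: least number of edges whose deletion leaves a
   balanced signed graph (F = setT always qualifies) *)
Definition frustration_index : nat :=
  \big[minn/#|E|]_(F : {set E} | balanced_edgesb (~: F)) #|F|.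

(* frustration number l_0: least number of vertices whose deletion leaves a
   balanced signed graph (X = setT always qualifies) *)
Definition frustration_number : nat :=
  \big[minn/#|V|]_(X : {set V} | balanced_edgesb (edges_avoiding X)) #|X|.

Definition subcubic : bool := [forall v, deg_in setT v <= 3].

End SignedGraph.

(* Main.v *)
Require Import Defs.
From mathcomp Require Import all_boot zify.
Set Implicit Arguments. Unset Strict Implicit. Unset Printing Implicit Defensive.

Section Proofs.
Variables (V E : finType) (ends : E -> V * V) (sgn : E -> bool).

Definition inc (e : E) (v : V) : nat := ((ends e).1 == v) + ((ends e).2 == v).
Definition negc (A : {set E}) := #|[set e in A | sgn e]|.
Definition harary (S : {set E}) :=
  exists s : V -> bool, forall e, e \in S -> sgn e = s (ends e).1 (+) s (ends e).2.

Lemma negcE (A : {set E}) : negc A = \sum_(e in A) (sgn e : nat).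
Proof.
rewrite /negc -sum1_card [LHS]big_mkcond [RHS]big_mkcond /=.
by apply: eq_bigr => e _; rewrite inE; case: (e \in A); case: (sgn e).
Qed.

Lemma deg_setU1 (e : E) (P : {set E}) (w : V) : e \notin P -> deg_in ends (e |: P) w = inc e w + deg_in ends P w.
Proof. by move=> eP; rewrite /deg_in big_setU1. Qed.

Lemma negc_setU1 (e : E) (P : {set E}) : e \notin P -> negc (e |: P) = sgn e + negc P.
Proof. by move=> eP; rewrite !negcE big_setU1. Qed.

Lemma inc_le_deg (e : E) (P : {set E}) (w : V) : e \in P -> inc e w <= deg_in ends P w.
Proof. by move=> eP; rewrite /deg_in (bigD1 e) //= leq_addr. Qed.

Lemma verts_deg (C : {set E}) (w : V) : (w \in verts_of ends C) = (0 < deg_in ends C w).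
Proof.
rewrite inE lt0n /deg_in sum_nat_eq0 negb_forall.
apply/existsP/existsP => [[e /andP[eC h]]|[e h]]; exists e.
  by rewrite eC /=; move: h; rewrite !(eq_sym _ w); case: (_ == _); case: (_ == _).
rewrite negb_imply in h; case/andP: h => eC h; rewrite eC /=.
by move: h; case: ((ends e).1 == w); case: ((ends e).2 == w).
Qed.

Lemma adj_sym (S : {set E}) : symmetric (adj_in ends S).
Proof.
move=> u v; apply/existsP/existsP => [][e /andP[eS h]]; exists e;
  by rewrite eS orbC.
Qed.

Lemma adj_mono (S T : {set E}) (u v : V) : S \subset T -> adj_in ends S u v -> adj_in ends T u v.
Proof.
move=> ST /existsP[e /andP[eS h]]; apply/existsP; exists e.
by rewrite (subsetP ST _ eS).
Qed.

Lemma connect_mono (S T : {set E}) (u v : V) : S \subset T -> connect (adj_in ends S) u v -> connect (adj_in ends T) u v.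
Proof.
move=> ST; apply: connect_sub => x y h; apply: connect1; exact: adj_mono h.
Qed.

Lemma balanced_mono (S T : {set E}) : balanced_edgesb ends sgn T -> S \subset T -> balanced_edgesb ends sgn S.
Proof.
move=> /forallP bT ST; apply/forallP => C; apply/implyP => /andP[cC CS].
by have /implyP := bT C; apply; rewrite cC (subset_trans CS ST).
Qed.


Lemma sum_pick (s : V -> bool) (a : V) : \sum_v (s v * (a == v)) = s a.
Proof.
rewrite (bigD1 a) //= eqxx muln1 big1 ?addn0 // => v /negbTE va.
by rewrite eq_sym va muln0.
Qed.

Lemma sum_inc (s : V -> bool) (e : E) : \sum_v (s v * inc e v) = s (ends e).1 + s (ends e).2.
Proof.
rewrite /inc; under eq_bigr do rewrite mulnDr.
by rewrite big_split /= !sum_pick.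
Qed.

Lemma circle_deg (C : {set E}) v : circle ends C -> deg_in ends C v = 2 * (v \in verts_of ends C).
Proof.
case/and3P => _ /forallP hd _.
case vC: (v \in verts_of ends C).
  by have /implyP := hd v; move/(_ vC)/eqP.
by move: vC; rewrite verts_deg; case: (deg_in ends C v).
Qed.

Lemma harary_balanced (S : {set E}) : harary S -> balanced_edgesb ends sgn S.
Proof.
case=> s hs; apply/forallP => C; apply/implyP => /andP[cC CS].
rewrite /positive_circle -/(negc C) negcE.
have key : \sum_(e in C) (sgn e : nat) + 2 * \sum_(e in C) (s (ends e).1 && s (ends e).2)
   = 2 * \sum_v (s v && (v \in verts_of ends C)).
  rewrite big_distrr /= -big_split /=.
  transitivity (\sum_(e in C) \sum_v (s v * inc e v)).
    apply: eq_bigr => e eC; rewrite sum_inc hs ?(subsetP CS) //.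
    by case: (s _); case: (s _).
  rewrite exchange_big big_distrr /=; apply: eq_bigr => v _.
  rewrite -big_distrr /= -/(deg_in ends C v) circle_deg //.
  by case: (s v); case: (v \in _); rewrite ?muln0.
have := congr1 odd key.
by rewrite oddD !oddM /= addbF => ->.
Qed.


Lemma path_edges (S : {set E}) (s : V -> bool)
  (hs : forall f, f \in S -> sgn f = s (ends f).1 (+) s (ends f).2) :
  forall (p : seq V) x, uniq (x :: p) -> path (adj_in ends S) x p ->
  exists P : {set E}, [/\ P \subset S,
     (forall w, deg_in ends P w + (w == x) + (w == last x p) = 2 * (w \in x :: p)),
     (forall w, w \in x :: p -> connect (adj_in ends P) x w) &
     odd (negc P) = s x (+) s (last x p)].
Proof.
elim=> [|y p IH] x.
  move=> _ _; exists set0; split.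
  - exact: sub0set.
  - move=> w; rewrite /deg_in big_set0 /= mem_seq1.
    by case: (w == x).
  - by move=> w; rewrite mem_seq1 => /eqP ->; exact: connect0.
  - by rewrite /negc; rewrite (_ : [set e in set0 | sgn e] = set0) ?cards0 ?addbb //;
      apply/setP => e; rewrite !inE.
rewrite [uniq _]/= => /andP[xyp uyp] /= /andP[axy pyp].
have [P [PS hdeg hcon hodd]] := IH y uyp pyp.
case/existsP: axy => f /andP[fS hf].
have incf : forall w, inc f w = (w == x) + (w == y).
  move=> w; rewrite /inc; case/orP: hf => /eqP ->; rewrite /= ?(eq_sym x) ?(eq_sym y) //.
  by rewrite addnC.
have degx : deg_in ends P x = 0.
  have := hdeg x; rewrite (negbTE xyp) muln0.
  by case: (deg_in ends P x).
have fP : f \notin P.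
  apply/negP => fP; have := inc_le_deg x fP; rewrite degx incf eqxx.
  by [].
have xy : x != y by apply: contraNneq xyp => ->; rewrite mem_head.
have sf : sgn f = s x (+) s y.
  rewrite hs //; case/orP: hf => /eqP -> //=; by rewrite addbC.
exists (f |: P); split.
- by rewrite subUset sub1set fS PS.
- move=> w; rewrite deg_setU1 // incf /=.
  case: (eqVneq w x) => [->|wx].
    rewrite degx (negbTE xy) mem_head.
    have -> : (x == last y p) = false.
      by apply/negP => /eqP ex; move: xyp; rewrite ex mem_last.
    by [].
  rewrite inE (negbTE wx) /= -hdeg.
  by rewrite add0n addn0 [(w == y) + _]addnC.
- move=> w; rewrite inE => /orP[/eqP ->|wyp]; first exact: connect0.
  apply: (@connect_trans _ _ y).
    apply: connect1; apply/existsP; exists f; rewrite setU11 /=.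
    by case/orP: hf => /eqP ->; rewrite eqxx ?orbT.
  apply: connect_mono (hcon w wyp); exact: subsetUr.
- rewrite negc_setU1 // oddD hodd sf /=.
  by case: (s x); case: (s y); case: (s (last y p)).
Qed.


Lemma balanced_harary_n n (S : {set E}) : #|S| = n -> balanced_edgesb ends sgn S -> harary S.
Proof.
elim: n S => [|n IH] S hS bS.
  exists (fun _ => false) => e eS.
  by move: hS; rewrite (cardD1 e) eS.
have [e eS] : exists e, e \in S by apply/card_gt0P; rewrite hS.
set S' := S :\ e.
have hS' : #|S'| = n by move: hS; rewrite (cardsD1 e) eS => -[].
have bS' : balanced_edgesb ends sgn S' by apply: balanced_mono bS _; exact: subsetDl.
have [s' hs'] := IH S' hS' bS'.
have hS'e : forall f, f \in S -> f != e -> f \in S'.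
  by move=> f fS fe; rewrite !inE fe fS.
case: (eqVneq (sgn e) (s' (ends e).1 (+) s' (ends e).2)) => [he|hne].
  exists s' => f fS; case: (eqVneq f e) => [->//|fe]; exact: hs' (hS'e f fS fe).
have csym : connect_sym (adj_in ends S') by apply: sym_connect_sym; exact: adj_sym.
case cuv: (connect (adj_in ends S') (ends e).1 (ends e).2); last first.
  exists (fun w => s' w (+) connect (adj_in ends S') (ends e).2 w) => f fS.
  case: (eqVneq f e) => [->|fe].
    rewrite connect0 (csym _ (ends e).1) cuv.
    by move: hne; case: (sgn e); case: (s' _); case: (s' _).
  have f'S := hS'e f fS fe.
  have adjf : connect (adj_in ends S') (ends f).1 (ends f).2.
    apply: connect1; apply/existsP; exists f; rewrite f'S /=. by rewrite -surjective_pairing eqxx.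
  rewrite (same_connect_r csym adjf) hs' //.
  by case: (s' _); case: (s' _); case: (connect _ _ _).
exfalso.
case/connectP: cuv => p0 pp0 hl.
case: (shortenP pp0) hl => p pp up _ hl.
have [P [PS hdeg hcon hodd]] := path_edges hs' up pp.
have eP : e \notin P by apply/negP => /(subsetP PS); rewrite !inE eqxx.
set C := e |: P.
have degC : forall w, deg_in ends C w = 2 * (w \in (ends e).1 :: p).
  move=> w; rewrite deg_setU1 // /inc -hdeg -hl !(eq_sym _ w).
  by rewrite addnC addnA.
have cC : circle ends C.
  apply/and3P; split.
  - by apply/set0Pn; exists e; exact: setU11.
  - apply/forallP => w; apply/implyP; rewrite verts_deg degC.
    by case: (w \in _).
  - apply/forallP => u; apply/implyP; rewrite verts_deg degC => hu.
    apply/forallP => v; apply/implyP; rewrite verts_deg degC => hv.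
    have hu' : u \in (ends e).1 :: p by move: hu; case: (u \in _).
    have hv' : v \in (ends e).1 :: p by move: hv; case: (v \in _).
    have PC : P \subset C by exact: subsetUr.
    have csC : connect_sym (adj_in ends C) by apply: sym_connect_sym; exact: adj_sym.
    apply: (@connect_trans _ _ (ends e).1).
      by rewrite csC; apply: connect_mono PC (hcon u hu').
    by apply: connect_mono PC (hcon v hv').
have CS : C \subset S by rewrite subUset sub1set eS (subset_trans PS) // subsetDl.
move/forallP: bS => /(_ C); rewrite cC CS /= /positive_circle -/(negc C).
rewrite negc_setU1 // oddD hodd -hl.
by move: hne; case: (sgn e); case: (s' _); case: (s' _).
Qed.

Lemma balanced_harary (S : {set E}) : balanced_edgesb ends sgn S -> harary S.
Proof. exact: balanced_harary_n. Qed.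


Lemma card_sum (A : {set E}) : #|A| = \sum_e ((e \in A) : nat).
Proof. by rewrite -sum1_card big_mkcond; apply: eq_bigr => e _; case: (e \in A). Qed.

Definition bad (t : V -> bool) := [set e | sgn e != t (ends e).1 (+) t (ends e).2].

Lemma l0_le_l (F : {set E}) : balanced_edgesb ends sgn (~: F) ->
  exists X : {set V}, #|X| <= #|F| /\ balanced_edgesb ends sgn (edges_avoiding ends X).
Proof.
move=> bF; exists [set (ends e).1 | e in F]; split; first exact: leq_imset_card.
apply: balanced_mono bF _; apply/subsetP => e; rewrite !inE => /andP[h _].
by apply: contra h => eF; apply/imsetP; exists e.
Qed.

Lemma local_opt (X : {set V}) (t : V -> bool) x :
  subcubic ends ->
  (forall t' : V -> bool, (forall w, w \notin X -> t' w = t w) -> #|bad t| <= #|bad t'|) ->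
  x \in X -> #|[set e | (e \in bad t) && (0 < inc e x)]| <= 1.
Proof.
move=> /forallP /(_ x) hsub hmin xX.
pose t' w := t w (+) (w == x).
have h1 : #|bad t| <= #|bad t'|.
  apply: hmin => w wX; rewrite /t'.
  have -> : (w == x) = false by apply/negP => /eqP wx; move: wX; rewrite wx xX.
  exact: addbF.
pose b e := e \in bad t.
pose o e := odd (inc e x).
pose lp e := ((ends e).1 == x) && ((ends e).2 == x).
have eb' : forall e, (e \in bad t') = b e (+) o e.
  move=> e; rewrite /b /o /t' /inc !inE oddD.
  by case: (sgn e); case: (t (ends e).1); case: (t (ends e).2);
    case: ((ends e).1 == x); case: ((ends e).2 == x).
rewrite !card_sum in h1.
have h2 : \sum_e ((b e (+) o e) : nat) + 2 * \sum_e ((b e && o e) : nat)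
        = \sum_e (b e : nat) + \sum_e (o e : nat).
  rewrite big_distrr -!big_split /=; apply: eq_bigr => e _.
  by case: (b e); case: (o e).
have h3 : \sum_e (o e : nat) + 2 * \sum_e (lp e : nat) <= 3.
  apply: leq_trans hsub; rewrite /deg_in big_distrr -big_split /=.
  apply: eq_leq; rewrite [RHS]big_mkcond /=; apply: eq_bigr => e _.
  rewrite inE /o /lp /inc.
  by case: ((ends e).1 == x); case: ((ends e).2 == x).
have h4 : #|[set e | (e \in bad t) && (0 < inc e x)]|
     <= \sum_e ((b e && o e) : nat) + \sum_e (lp e : nat).
  rewrite card_sum -big_split /=; apply: leq_sum => e _.
  rewrite inE /b /o /lp /inc.
  by case: (e \in bad t); case: ((ends e).1 == x); case: ((ends e).2 == x).
have h1' : \sum_e (b e : nat) <= \sum_e ((b e (+) o e) : nat).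
  move: h1; rewrite [in X in _ <= X](eq_bigr (fun e => (b e (+) o e) : nat)) // => e _; by rewrite eb'.
move: h1' h2 h3 h4.
move: (\sum_e (b e : nat)) (\sum_e ((b e (+) o e) : nat)) (\sum_e ((b e && o e) : nat))
  (\sum_e (o e : nat)) (\sum_e (lp e : nat)) (#|[set e in bad t | 0 < inc e x]|).
clear. move=> B1 B2 B3 O L I. lia.
Qed.

Lemma l_le_l0 (X : {set V}) : subcubic ends ->
  balanced_edgesb ends sgn (edges_avoiding ends X) ->
  exists F : {set E}, #|F| <= #|X| /\ balanced_edgesb ends sgn (~: F).
Proof.
move=> hsub /balanced_harary [s0 hs0].
pose P (t : {ffun V -> bool}) := [forall w, (w \notin X) ==> (t w == s0 w)].
pose t0 : {ffun V -> bool} := [ffun w => s0 w].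
have Pt0 : P t0 by apply/forallP => w; rewrite ffunE eqxx implybT.
case: (arg_minnP (fun t : {ffun V -> bool} => #|bad t|) Pt0) => t Pt tmin.
have tX : forall w, w \notin X -> t w = s0 w.
  by move=> w wX; move/forallP: Pt => /(_ w); rewrite wX => /eqP.
exists (bad t); split; last first.
  apply: harary_balanced; exists t => e; rewrite !inE negbK => /eqP //.
have hloc : forall x, x \in X -> #|[set e | (e \in bad t) && (0 < inc e x)]| <= 1.
  move=> x xX; apply: (local_opt hsub _ xX) => t' ht'.
  have := tmin [ffun w => t' w]; rewrite /=.
  rewrite (_ : bad [ffun w => t' w] = bad t').
    apply; apply/forallP => w; apply/implyP => wX; rewrite ffunE ht' // tX //.
  by apply/setP => e; rewrite !inE !ffunE.
rewrite card_sum.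
apply: (@leq_trans (\sum_(x in X) #|[set e | (e \in bad t) && (0 < inc e x)]|)).
  under [in X in _ <= X]eq_bigr do rewrite card_sum.
  rewrite exchange_big /=; apply: leq_sum => e _.
  case eb: (e \in bad t) => //.
  have [y yX incy] : exists2 y, y \in X & 0 < inc e y.
    case h1: ((ends e).1 \in X); first by exists (ends e).1; rewrite // /inc eqxx.
    case h2: ((ends e).2 \in X); first by exists (ends e).2; rewrite // /inc eqxx addn1.
    have : e \in edges_avoiding ends X by rewrite inE h1 h2.
    move/hs0; rewrite -!tX ?h1 ?h2 // => he.
    by move: eb; rewrite inE he eqxx.
  by rewrite (bigD1 y) //= inE eb incy.
rewrite -sum1_card; apply: leq_sum => x xX; exact: hloc.
Qed.

End Proofs.

Lemma bigmin_le (I : eqType) (r : seq I) (P : pred I) (F : I -> nat) d x :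
  x \in r -> P x -> \big[minn/d]_(i <- r | P i) F i <= F x.
Proof.
elim: r => [//|y r IH]; rewrite inE big_cons => /orP[/eqP <- Px|xr Px].
  by rewrite Px geq_minl.
case: (P y); last exact: IH.
by rewrite geq_min IH ?orbT.
Qed.

Theorem theorem1 (V E : finType) (ends : E -> V * V) (sgn : E -> bool) :
  subcubic ends ->
  frustration_number ends sgn = frustration_index ends sgn.
Proof.
move=> hsub.
have numle : forall X, balanced_edgesb ends sgn (edges_avoiding ends X) ->
    frustration_number ends sgn <= #|X|.
  by move=> X hX; apply: bigmin_le => //; exact: mem_index_enum.
have idxle : forall F, balanced_edgesb ends sgn (~: F) ->
    frustration_index ends sgn <= #|F|.
  by move=> F hF; apply: bigmin_le => //; exact: mem_index_enum.
apply/eqP; rewrite eqn_leq; apply/andP; split.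
- rewrite /frustration_index; apply: (big_ind (fun n => frustration_number ends sgn <= n)).
  + have bT : balanced_edgesb ends sgn (~: [set: E]).
      by apply: harary_balanced; exists (fun _ => false) => e; rewrite !inE.
    have [X [hX bX]] := l0_le_l bT.
    by apply: leq_trans (numle X bX) _; rewrite cardsT in hX.
  + by move=> a b ha hb; rewrite leq_min ha hb.
  + move=> F hF; have [X [hX bX]] := l0_le_l hF.
    exact: leq_trans (numle X bX) hX.
- rewrite /frustration_number; apply: (big_ind (fun n => frustration_index ends sgn <= n)).
  + have bT : balanced_edgesb ends sgn (edges_avoiding ends [set: V]).
      apply: harary_balanced; exists (fun _ => false) => e; rewrite !inE //.
    have [F [hF bF]] := l_le_l0 hsub bT.
    by apply: leq_trans (idxle F bF) _; rewrite cardsT in hF.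
  + by move=> a b ha hb; rewrite leq_min ha hb.
  + move=> X hX; have [F [hF bF]] := l_le_l0 hsub hX.
    exact: leq_trans (idxle F bF) hF.
Qed.
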